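(* Let $Q$ be a Boolean conjunctive query without self-joins and $I$ an instance. Then there exists a purified instance $I^p\subseteq I$ such that $\mathcal M_Q(I)=\mathcal M_Q(I^p)$. In particular $I\vDash Q$ iff $I^p\vDash Q$.
   Context: Relations carry keys and are of consistent or inconsistent type; a key-group is the set of tuples of a relation with a given key value; a repair of $I$ is a maximal subset of $I$ satisfying all key constraints (one tuple per key-group); $I\vDash Q$ means $Q(r)$ holds for every repair $r$. The full query $Q^f$ has the body of $Q$ with all variables free, so $Q^f(r)$ is the set of satisfying valuations (tuples indexed by the variables of $Q$). A repair $r$ is frugal for $Q$ if no repair $r'$ of $I$ satisfies $Q^f(r')\subsetneq Q^f(r)$. $\mathcal M_Q(I)=\{Q^f(r): r \text{ a frugal repair of } I \text{ for } Q\}$. An instance $I$ is purified (for $Q$) if for every relation $R$ occurring in $Q$, $\Pi_{attr(R)}(Q^f(I))=R^I$, where $\Pi_{attr(R)}$ projects onto the variables in the atom of $R$ (so every tuple of $I$ participates in some answer of $Q^f$ on $I$). *)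

(* Defs.v *)
From Stdlib Require Import List.
Import ListNotations.
Set Implicit Arguments.

(* Every relation R has an arity [arity R] and a primary key consisting of
   its first [keylen R] positions. *)
Definition fact (Rel D : Type) := (Rel * list D)%type.
Definition atom (Rel V : Type) := (Rel * list V)%type.

Definition wf_instance (Rel D : Type) (arity : Rel -> nat) (I : list (fact Rel D)) :=
  forall f, In f I -> length (snd f) = arity (fst f).
Definition wf_query (Rel V : Type) (arity : Rel -> nat) (Q : list (atom Rel V)) :=
  forall a, In a Q -> length (snd a) = arity (fst a).

Definition no_self_join (Rel V : Type) (Q : list (atom Rel V)) := NoDup (map fst Q).

Definition same_key (Rel D : Type) (keylen : Rel -> nat) (f g : fact Rel D) :=
  fst f = fst g /\ firstn (keylen (fst f)) (snd f) = firstn (keylen (fst g)) (snd g).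

(* Subinstances are represented as predicates on facts. *)
Definition inI (Rel D : Type) (I : list (fact Rel D)) : fact Rel D -> Prop :=
  fun f => In f I.
Definition subi (Rel D : Type) (r s : fact Rel D -> Prop) := forall f, r f -> s f.

Definition key_consistent (Rel D : Type) (keylen : Rel -> nat) (r : fact Rel D -> Prop) :=
  forall f g, r f -> r g -> same_key keylen f g -> f = g.

Definition is_repair (Rel D : Type) (keylen : Rel -> nat) (I : list (fact Rel D))
    (r : fact Rel D -> Prop) :=
  subi r (inI I) /\ key_consistent keylen r /\
  (forall r', subi r r' -> subi r' (inI I) -> key_consistent keylen r' -> subi r' r).

Definition full_query (Rel V D : Type) (Q : list (atom Rel V)) (r : fact Rel D -> Prop)
    (theta : V -> D) : Prop :=
  forall a, In a Q -> r (fst a, map theta (snd a)).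

Definition holds (Rel V D : Type) (Q : list (atom Rel V)) (r : fact Rel D -> Prop) :=
  exists theta, full_query Q r theta.

Definition entails (Rel V D : Type) (keylen : Rel -> nat) (Q : list (atom Rel V))
    (I : list (fact Rel D)) :=
  forall r, is_repair keylen I r -> holds Q r.

Definition set_eq (A : Type) (X Y : A -> Prop) := forall x, X x <-> Y x.
Definition strict_subset (A : Type) (X Y : A -> Prop) :=
  (forall x, X x -> Y x) /\ exists x, Y x /\ ~ X x.

Definition frugal (Rel V D : Type) (keylen : Rel -> nat) (Q : list (atom Rel V))
    (I : list (fact Rel D)) (r : fact Rel D -> Prop) :=
  is_repair keylen I r /\
  ~ (exists r', is_repair keylen I r' /\ strict_subset (full_query Q r') (full_query Q r)).

(* M_Q(I) as a family of sets of valuations (membership up to extensionality). *)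
Definition MQ (Rel V D : Type) (keylen : Rel -> nat) (Q : list (atom Rel V))
    (I : list (fact Rel D)) (S : (V -> D) -> Prop) :=
  exists r, frugal keylen Q I r /\ set_eq (full_query Q r) S.

Definition purified (Rel V D : Type) (Q : list (atom Rel V)) (I : list (fact Rel D)) :=
  forall a, In a Q -> forall t : list D,
    In (fst a, t) I <-> exists theta, full_query Q (inI I) theta /\ t = map theta (snd a).

(* Main.v *)
Require Import Defs.
From Stdlib Require Import List Classical Lia Wf_nat.
Import ListNotations.
Set Implicit Arguments.

Lemma sk_sym (Rel D : Type) (kl : Rel -> nat) (f g : fact Rel D) :
  same_key kl f g -> same_key kl g f.
Proof. destruct f, g; unfold same_key; simpl; intros [-> H]; auto. Qed.

Lemma sk_trans (Rel D : Type) (kl : Rel -> nat) (f g h : fact Rel D) :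
  same_key kl f g -> same_key kl g h -> same_key kl f h.
Proof.
  destruct f, g, h; unfold same_key; simpl; intros [-> H1] [-> H2]; split; congruence.
Qed.

Lemma fq_mono (Rel V D : Type) (Q : list (atom Rel V)) (r s : fact Rel D -> Prop) th :
  subi r s -> full_query Q r th -> full_query Q s th.
Proof. intros Hs H a Ha; apply Hs, H, Ha. Qed.

Definition nonpart (Rel V D : Type) (Q : list (atom Rel V)) (J : fact Rel D -> Prop) f :=
  ~ exists a theta, In a Q /\ full_query Q J theta /\ f = (fst a, map theta (snd a)).

Lemma fq_avoid (Rel V D : Type) (Q : list (atom Rel V)) (I : list (fact Rel D)) f
  (r : fact Rel D -> Prop) th :
  nonpart Q (inI I) f -> subi r (inI I) -> full_query Q r th ->
  forall a, In a Q -> (fst a, map th (snd a)) <> f.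
Proof.
  intros Hn Hs H a Ha E. apply Hn. exists a, th. repeat split; auto.
  apply (fq_mono Hs H).
Qed.


Lemma L_rf (Rel D : Type) (kl : Rel -> nat) (I : list (fact Rel D)) f r :
  In f I -> is_repair kl I r ->
  is_repair kl I (fun g => (r g /\ ~ same_key kl f g) \/ g = f).
Proof.
  intros Hf [Hs [Hc Hm]]. split; [|split].
  - intros g [[Hg _]| ->]; [apply Hs|]; auto.
  - intros g h [[Hg Ng]| Eg] [[Hh Nh]| Eh] Sk; subst; auto.
    all: exfalso; eauto using sk_sym.
  - intros r'' Hsub Hs'' Hc'' g Hg.
    destruct (classic (same_key kl f g)) as [Sk|Nk].
    + right. symmetry. apply Hc''; auto.
    + left. split; auto.
      assert (Hr4 : subi (fun h => r h \/ h = g) r).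
      { apply Hm.
        - intros h Hh; left; auto.
        - intros h [Hh| ->]; [apply Hs; auto| apply Hs''; auto].
        - assert (K : forall h, r h -> same_key kl h g -> h = g).
          { intros h Hh Sk. apply Hc''; auto. apply Hsub. left. split; auto.
            intro C. apply Nk. apply (sk_trans C Sk). }
          intros x y [Hx| Ex] [Hy| Ey] Sk; [apply Hc; auto | rewrite Ey in *; apply K; auto | rewrite Ex in *; symmetry; apply K; auto; apply sk_sym; auto | congruence]. }
      apply Hr4; auto.
Qed.

Lemma L_rB (Rel D : Type) (kl : Rel -> nat) (I I' : list (fact Rel D)) f r :
  (forall g, In g I' <-> In g I /\ ~ same_key kl f g) -> is_repair kl I r ->
  is_repair kl I' (fun g => r g /\ ~ same_key kl f g).
Proof.
  intros HI [Hs [Hc Hm]]. split; [|split].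
  - intros g [Hg Ng]; apply HI; split; auto. apply Hs; auto.
  - intros g h [Hg _] [Hh _]; auto.
  - intros r'' Hsub Hs'' Hc'' g Hg.
    assert (Hg' := Hs'' g Hg). apply HI in Hg'. destruct Hg' as [HgI Nk].
    split; auto.
    assert (Hr4 : subi (fun h => r h \/ h = g) r).
    { apply Hm.
      - intros h Hh; left; auto.
      - intros h [Hh| ->]; [apply Hs; auto| auto].
      - assert (K : forall h, r h -> same_key kl h g -> h = g).
        { intros h Hh Sk. apply Hc''; auto. apply Hsub. split; auto.
          intro C. apply Nk. apply (sk_trans C Sk). }
        intros x y [Hx| Ex] [Hy| Ey] Sk; [apply Hc; auto | rewrite Ey in *; apply K; auto | rewrite Ex in *; symmetry; apply K; auto; apply sk_sym; auto | congruence]. }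
    apply Hr4; auto.
Qed.

Lemma L_sf (Rel D : Type) (kl : Rel -> nat) (I I' : list (fact Rel D)) f s :
  In f I -> (forall g, In g I' <-> In g I /\ ~ same_key kl f g) -> is_repair kl I' s ->
  is_repair kl I (fun g => s g \/ g = f).
Proof.
  intros Hf HI [Hs [Hc Hm]].
  assert (Hn : forall g, s g -> ~ same_key kl f g).
  { intros g Hg. apply (proj1 (HI g) (Hs g Hg)). }
  split; [|split].
  - intros g [Hg| ->]; auto. apply (proj1 (HI g) (Hs g Hg)).
  - intros g h [Hg| Eg] [Hh| Eh] Sk; [apply Hc; auto | | | congruence].
    + rewrite Eh in Sk. exfalso. apply (Hn g Hg). apply sk_sym; auto.
    + rewrite Eg in Sk. exfalso. apply (Hn h Hh). auto.
  - intros r'' Hsub Hs'' Hc'' g Hg.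
    destruct (classic (same_key kl f g)) as [Sk|Nk].
    + right. symmetry. apply Hc''; auto.
    + left.
      assert (Hr4 : subi (fun h => s h \/ h = g) s).
      { apply Hm.
        - intros h Hh; left; auto.
        - intros h [Hh| ->]; [apply Hs; auto| apply HI; split; [apply Hs''; auto | auto]].
        - assert (K : forall h, s h -> same_key kl h g -> h = g).
          { intros h Hh Sk. apply Hc''; auto. }
          intros x y [Hx| Ex] [Hy| Ey] Sk; [apply Hc; auto | rewrite Ey in *; apply K; auto | rewrite Ex in *; symmetry; apply K; auto; apply sk_sym; auto | congruence]. }
      apply Hr4; auto.
Qed.

Lemma step (Rel V D : Type) (kl : Rel -> nat) (Q : list (atom Rel V))
  (I I' : list (fact Rel D)) f :
  In f I -> nonpart Q (inI I) f ->
  (forall g, In g I' <-> In g I /\ ~ same_key kl f g) ->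
  (forall S, MQ kl Q I S <-> MQ kl Q I' S) /\ (entails kl Q I <-> entails kl Q I').
Proof.
  intros Hf Hnp HI.
  assert (FqB : forall r, is_repair kl I r -> forall th,
    full_query Q (fun g => (r g /\ ~ same_key kl f g) \/ g = f) th ->
    full_query Q (fun g => r g /\ ~ same_key kl f g) th).
  { intros r Hr th H a Ha. destruct (H a Ha) as [E| E]; auto.
    exfalso. refine (fq_avoid Hnp _ H a Ha E).
    apply (proj1 (L_rf f Hf Hr)). }
  assert (FqS : forall s, is_repair kl I' s -> forall th,
    full_query Q (fun g => s g \/ g = f) th -> full_query Q s th).
  { intros s Hs th H a Ha. destruct (H a Ha) as [E| E]; auto.
    exfalso. refine (fq_avoid Hnp _ H a Ha E).
    apply (proj1 (L_sf I Hf HI Hs)). }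
  split; [intros S; split|split].
  - intros [r [[Hr Hfr] HS]].
    exists (fun g => r g /\ ~ same_key kl f g). split; [split|].
    + apply (L_rB I' HI Hr).
    + intros [s [Hs [Hsub [x [Hx1 Hx2]]]]].
      apply Hfr. exists (fun g => s g \/ g = f). split; [apply (L_sf I Hf HI Hs)|].
      split.
      * intros th H. apply (fq_mono (r := fun g => r g /\ ~ same_key kl f g) (s := r)); [intros g [? ?]; auto|].
        apply Hsub, (FqS s Hs), H.
      * exists x. split.
        -- apply (fq_mono (r := fun g => r g /\ ~ same_key kl f g) (s := r)) in Hx1; auto. intros g [? ?]; auto.
        -- intro C. apply Hx2, (FqS s Hs), C.
    + assert (Eq : forall th, full_query Q r th -> full_query Q (fun g => (r g /\ ~ same_key kl f g) \/ g = f) th).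
      { intros th H. apply NNPP. intro C. apply Hfr.
        exists (fun g => (r g /\ ~ same_key kl f g) \/ g = f).
        split; [apply (L_rf f Hf Hr)|]. split.
        - intros th' H'. apply (fq_mono (r := fun g => r g /\ ~ same_key kl f g)).
          + intros g [? ?]; auto.
          + apply FqB; auto.
        - exists th; auto. }
      intros th. rewrite <- (HS th). split; intro H.
      * apply (fq_mono (r := fun g => r g /\ ~ same_key kl f g)); auto. intros g [? ?]; auto.
      * apply FqB; auto.
  - intros [s [[Hs Hfs] HS]].
    exists (fun g => s g \/ g = f). split; [split|].
    + apply (L_sf I Hf HI Hs).
    + intros [r [Hr [Hsub [x [Hx1 Hx2]]]]].
      apply Hfs. exists (fun g => r g /\ ~ same_key kl f g). split; [apply (L_rB I' HI Hr)|].
      split.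
      * intros th H. apply (FqS s Hs), Hsub.
        apply (fq_mono (r := fun g => r g /\ ~ same_key kl f g)); auto. intros g [? ?]; auto.
      * exists x. split.
        -- apply (FqS s Hs), Hx1.
        -- intro C. apply Hx2. apply (fq_mono (r := fun g => r g /\ ~ same_key kl f g)); auto.
           intros g [? ?]; auto.
    + intros th. rewrite <- (HS th). split; intro H.
      * apply (FqS s Hs), H.
      * apply (fq_mono (r := s)); auto. intros g ?; left; auto.
  - intros He s Hs. destruct (He _ (L_sf I Hf HI Hs)) as [th H].
    exists th. apply (FqS s Hs), H.
  - intros He r Hr. destruct (He _ (L_rB I' HI Hr)) as [th H].
    exists th. apply (fq_mono (r := fun g => r g /\ ~ same_key kl f g)); auto.
    intros g [? ?]; auto.
Qed.

Lemma filter_ex (A : Type) (P : A -> Prop) (L : list A) :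
  exists L', (forall g, In g L' <-> In g L /\ ~ P g) /\ length L' <= length L /\
    ((exists x, In x L /\ P x) -> length L' < length L).
Proof.
  induction L as [|x L IH].
  - exists []. simpl. split; [tauto|]. split; [lia|]. intros [x [[] _]].
  - destruct IH as [L' [H1 [H2 H3]]]. destruct (classic (P x)) as [Px|Nx].
    + exists L'. split; [|simpl; split; lia].
      intros g. rewrite H1. simpl. split; [tauto|]. intros [[<-|?] ?]; tauto.
    + exists (x :: L'). split; [|split].
      * intros g. simpl. rewrite H1. split; [intros [<-|?]; tauto|].
        intros [[<-|?] ?]; tauto.
      * simpl; lia.
      * intros [y [[<-|Hy] Py]]; [tauto|]. simpl. assert (length L' < length L) by eauto. lia.
Qed.

Lemma nodup_fst (Rel V : Type) (Q : list (atom Rel V)) a a' :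
  NoDup (map fst Q) -> In a Q -> In a' Q -> fst a = fst a' -> a = a'.
Proof.
  induction Q as [|b Q IH]; simpl; [tauto|].
  intros Hn Ha Ha' E. inversion Hn as [|? ? Hnb Hn']; subst.
  destruct Ha as [<-|Ha]; destruct Ha' as [<-|Ha']; auto.
  - exfalso; apply Hnb. rewrite E. apply in_map; auto.
  - exfalso; apply Hnb. rewrite <- E. apply in_map; auto.
Qed.

Unset Implicit Arguments.
Theorem lemma2p3 (Rel V D : Type) (arity keylen : Rel -> nat)
    (Q : list (atom Rel V)) (I : list (fact Rel D)) :
  (forall R, keylen R <= arity R) ->
  wf_query arity Q ->
  no_self_join Q ->
  (forall x : V, exists a, In a Q /\ In x (snd a)) ->
  wf_instance arity I ->
  exists Ip : list (fact Rel D),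
    incl Ip I /\ purified Q Ip /\
    (forall S : (V -> D) -> Prop, MQ keylen Q I S <-> MQ keylen Q Ip S) /\
    (entails keylen Q I <-> entails keylen Q Ip).
Proof.
  intros _ _ Hnsj _ _.
  remember (length I) as n eqn:En. revert I En.
  induction n as [n IH] using (well_founded_induction lt_wf).
  intros I En.
  destruct (classic (exists f, In f I /\ nonpart Q (inI I) f)) as [[f [Hf Hnp]]|Hall].
  - destruct (filter_ex (same_key keylen f) I) as [I' [HI' [_ Hlt]]].
    assert (Hl : length I' < length I).
    { apply Hlt. exists f. split; auto. split; auto. }
    destruct (IH (length I') ltac:(lia) I' eq_refl) as [Ip [Hinc [Hp [HM He]]]].
    destruct (step I' Hf Hnp HI') as [HM' He'].
    exists Ip. split; [|split; [auto|split]].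
    + intros g Hg. apply (proj1 (HI' g) (Hinc g Hg)).
    + intros S. rewrite HM'. apply HM.
    + rewrite He'. apply He.
  - exists I. split; [apply incl_refl|split; [|split; tauto]].
    intros a Ha t. split.
    + intros Ht. apply NNPP. intro C. apply Hall. exists (fst a, t). split; auto.
      intros [a' [th [Ha' [Hq E]]]]. apply C. exists th. split; auto.
      injection E as E1 E2. assert (a = a') by (apply (nodup_fst Q); auto).
      subst. auto.
    + intros [th [Hq ->]]. apply (Hq a Ha).
Qed.
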